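(* Let $S(A)$ be a regular Stanley sequence with character $\lambda(A)$. Then $\lambda(A)\ge 0$, and $\lambda(A)\ne 1$, $\lambda(A)\ne 3$.
   Context: A set of non-negative integers is 3-free if no three of its elements form an arithmetic progression. For a finite 3-free set $A=\{a_0<\cdots<a_k\}$ of non-negative integers, the Stanley sequence $S(A)=(a_n)_{n\ge0}$ is the increasing sequence with initial terms $a_0,\ldots,a_k$ in which each subsequent $a_{n+1}$ is the smallest integer greater than $a_n$ such that $\{a_0,\ldots,a_{n+1}\}$ is 3-free. Throughout, Stanley sequences are in root position ($a_0=0$). A Stanley sequence $(a_n)$ is independent with character $\lambda$ if for all sufficiently large $k$: $a_{2^k+i}=a_{2^k}+a_i$ for $0\le i<2^k$, and $a_{2^k}=2a_{2^k-1}-\lambda+1$. A Stanley sequence $(a_n)$ is regular with character $\lambda$ if there exist a constant $\sigma$ and an independent Stanley sequence $(a'_n)$ of character $\lambda$ such that for all large $k$ and $0\le i<2^k$: $a_{2^k-\sigma+i}=a_{2^k-\sigma}+a'_i$ and $a_{2^k-\sigma}=2a_{2^k-\sigma-1}-\lambda+1$ (these data are unique). *)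

(* Defs.v *)
From mathcomp Require Import all_boot all_order all_algebra.
Set Implicit Arguments. Unset Strict Implicit. Unset Printing Implicit Defensive.
Import Order.TTheory GRing.Theory Num.Theory.

Definition three_free (s : seq nat) : Prop :=
  forall x y z, x \in s -> y \in s -> z \in s -> x < y -> y < z -> x + z <> 2 * y.

Definition stanley_initial (A : seq nat) : Prop :=
  [/\ A <> [::], sorted ltn A, head 1 A = 0 & three_free A].

Definition stanley (A : seq nat) (a : nat -> nat) : Prop :=
  [/\ stanley_initial A,
      (forall i, i < size A -> a i = nth 0 A i) &
      (forall n, (size A).-1 <= n ->
         [/\ a n < a n.+1,
             three_free (mkseq a n.+2) &
             forall m, a n < m -> m < a n.+1 -> ~ three_free (rcons (mkseq a n.+1) m)])].

Definition is_stanley_seq (a : nat -> nat) : Prop := exists A, stanley A a.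

Definition independent (a : nat -> nat) (lambda : int) : Prop :=
  exists K, forall k, K <= k ->
    (forall i, i < 2 ^ k -> a (2 ^ k + i) = a (2 ^ k) + a i) /\
    (Posz (a (2 ^ k)%N) = 2 * Posz (a (2 ^ k).-1%N) - lambda + 1)%R.

(* Evaluate a nat-indexed sequence at an integer index (used only at
   indices that are nonnegative for all large k). *)
Definition at_int (a : nat -> nat) (z : int) : nat := a `|z|%N.

Definition regular (a : nat -> nat) (lambda : int) : Prop :=
  exists (sigma : int) (a' : nat -> nat),
    is_stanley_seq a' /\ independent a' lambda /\
    exists K, forall k, K <= k ->
      (forall i, i < 2 ^ k ->
         at_int a (Posz (2 ^ k)%N - sigma + Posz i)%R
           = at_int a (Posz (2 ^ k)%N - sigma)%R + a' i) /\
      (Posz (at_int a (Posz (2 ^ k)%N - sigma))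
        = 2 * Posz (at_int a (Posz (2 ^ k)%N - sigma - 1)) - lambda + 1)%R.

(* Main.v *)
Require Import Defs.
From mathcomp Require Import all_boot all_order all_algebra.
From mathcomp Require Import zify.
From Stdlib Require Import Classical.
Import Order.TTheory GRing.Theory Num.Theory.
Set Implicit Arguments.

Lemma mem_mk (b : nat -> nat) N x : x \in mkseq b N -> exists2 i, i < N & x = b i.
Proof. by case/mapP=> i; rewrite mem_iota add0n => /andP[_ Hi] ->; exists i. Qed.

Lemma mk_mem (b : nat -> nat) N i : i < N -> b i \in mkseq b N.
Proof. by move=> Hi; apply: map_f; rewrite mem_iota add0n Hi. Qed.

Lemma st_incr A b : stanley A b -> forall i, b i < b i.+1.
Proof.
case=> [[Hne Hsort Hhead Htf] Hinit Hstep] i.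
case: (ltnP i.+1 (size A)) => Hi.
  rewrite !Hinit //; last by apply: ltnW.
  apply: (sorted_ltn_nth ltn_trans) => //; rewrite inE //; exact: ltnW.
by have [? _ _] := Hstep i ltac:(lia).
Qed.

Lemma st_mono A b : stanley A b -> forall i j, i < j -> b i < b j.
Proof. move=> H i j; apply: (@homo_ltn _ b (fun x y : nat => x < y)); [move=> ? ? ?; exact: ltn_trans|exact: st_incr H]. Qed.

Lemma st_le A b : stanley A b -> forall i j, i <= j -> b i <= b j.
Proof.
move=> H i j; rewrite leq_eqVlt => /orP[/eqP->//|/(st_mono H)]; exact: ltnW.
Qed.

Lemma st_b0 A b : stanley A b -> b 0 = 0.
Proof.
case=> [[Hne Hsort Hhead Htf] Hinit Hstep].
by case: A Hne Hsort Hhead Htf Hinit Hstep => // x s _ _ /= -> _ ->.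
Qed.

Lemma st_ge A b : stanley A b -> forall i, i <= b i.
Proof.
move=> H; elim=> [|i IH] //; have := st_incr H i; lia.
Qed.

Lemma st_tf A b : stanley A b -> forall N, three_free (mkseq b N).
Proof.
move=> H N; have [[Hne Hsort Hhead Htf] Hinit Hstep] := H.
have As : 0 < size A by case: A Hne {Hsort Hhead Htf Hinit Hstep H}.
case: (leqP N (size A)) => HN.
  move=> x y z /mem_mk[i Hi ->] /mem_mk[j Hj ->] /mem_mk[l Hl ->].
  rewrite !Hinit; try lia.
  by apply: Htf; apply: mem_nth; [exact: leq_trans Hi HN|exact: leq_trans Hj HN|exact: leq_trans Hl HN].
have [_ + _] := Hstep (N - 2) ltac:(lia).
by have -> : (N - 2).+2 = N by lia.
Qed.

Lemma st_noAP A b : stanley A b ->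
  forall i j l, b i < b j -> b j < b l -> b i + b l <> 2 * b j.
Proof.
move=> H i j l; apply: (st_tf H (maxn i (maxn j l)).+1); apply: mk_mem; lia.
Qed.

Lemma st_greedy A b n m : stanley A b -> (size A).-1 <= n ->
  b n < m -> m < b n.+1 ->
  (forall i j, i <= n -> j <= n -> b i < b j -> b i + m <> 2 * b j) -> False.
Proof.
move=> H Hn Hm1 Hm2 Hb.
have [_ _ Hstep] := H.
have [_ _ Hg] := Hstep n Hn; apply: (Hg m Hm1 Hm2).
have Htf := st_tf H n.+1.
have Hle : forall x, x \in mkseq b n.+1 -> exists2 i, i <= n & x = b i.
  by move=> x /mem_mk[i Hi ->]; exists i.
have Hle2 : forall i, i <= n -> b i <= b n by move=> i; apply: st_le H i n.
move=> x y z Hx Hy Hz Hxy Hyz.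
have Hs : forall w, w \in rcons (mkseq b n.+1) m -> w = m \/ w \in mkseq b n.+1.
  by move=> w; rewrite mem_rcons in_cons => /orP[/eqP|]; auto.
case: (Hs _ Hz) => [Ez|Hz'].
- subst z; case: (Hs _ Hy) => [Ey|Hy']; first lia.
  case: (Hle _ Hy') => j Hj Ey; have := Hle2 j Hj.
  case: (Hs _ Hx) => [Ex|Hx']; first lia.
  case: (Hle _ Hx') => i Hi Ex; subst x y; move=> _; exact: Hb.
- case: (Hle _ Hz') => l Hl El; have := Hle2 l Hl => Hlb.
  case: (Hs _ Hy) => [Ey|Hy']; first lia.
  case: (Hs _ Hx) => [Ex|Hx']; first lia.
  exact: Htf.
Qed.

Unset Implicit Arguments.

Theorem mainTheorem10 (A : seq nat) (a : nat -> nat) (lambda : int) :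
  stanley A a -> regular a lambda ->
  (0 <= lambda)%R /\ lambda <> 1%R /\ lambda <> 3%R.
Proof.
move=> _ [sigma [b [[A' Hb] [[K Hind] _]]]].
pose k := K + size A' + 7.
have Hkk : k < 2 ^ k by apply: ltn_expl.
have [Hk1 Hk2] := Hind k ltac:(rewrite /k; lia).
have [Hk1' Hk2'] := Hind k.+1 ltac:(rewrite /k; lia).
pose n := (2 ^ k).-1.
have Hn : n.+1 = 2 ^ k by rewrite /n prednK // expn_gt0.
have Hsz : (size A').-1 <= n by rewrite /n; lia.
pose M := b n; pose c := b (2 ^ k).
have HMc : M < c by have := st_mono Hb n n.+1 (ltnSn n); rewrite Hn.
have HnM : n <= M := st_ge Hb n.
have Hb0 := st_b0 Hb.
have Hle : forall j, j <= n -> b j <= M by move=> j Hj; apply: st_le Hb j n Hj.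
have Hgr : forall m, M < m -> m < c ->
    (forall i j, i <= n -> j <= n -> b i < b j -> b i + m <> 2 * b j) -> False.
  by move=> m H1 H2; apply: (@st_greedy A' b n m Hb Hsz H1); rewrite Hn.
have Hlam : (Posz c = 2 * Posz M - lambda + 1)%R by exact: Hk2.
split; [|split].
- have Hc : c <= 2 * M + 1.
    rewrite leqNgt; apply/negP => Hc.
    apply: (Hgr (2 * M + 1)); first lia; first lia.
    move=> i j Hi Hj _; have := Hle j Hj; lia.
  lia.
- move=> E; subst lambda.
  have E2 : c = 2 * M by lia.
  have := st_noAP Hb 0 n (2 ^ k); rewrite -/M -/c Hb0; lia.
- move=> E; subst lambda.
  have E2 : c + 2 = 2 * M by lia.
  have HM6 : 6 <= M by rewrite /n in HnM; lia.
  have Hp : 2 ^ k.+1 = 2 ^ k + 2 ^ k by rewrite expnS; lia.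
  have Hpm : (2 ^ k.+1).-1 = 2 ^ k + n by rewrite Hp /n; lia.
  have HcM : b (2 ^ k.+1).-1 = c + M by rewrite Hpm Hk1 // /n; lia.
  pose C := b (2 ^ k.+1).
  have HC : C = 3 * c.
    have := Hk2'; rewrite HcM -/C; lia.
  case: (classic (exists j, j < 2 ^ k /\ b j = M - 2)) => [[j [Hj Ej]]|Hno].
    have := st_noAP Hb (2 ^ k + j) (2 ^ k.+1) (2 ^ k.+1 + (2 ^ k.+1).-1).
    rewrite Hk1 // Hk1' ?HcM -/C -/c; last by rewrite Hp; lia.
    lia.
  have Hidx : forall j, j <= n -> j < 2 ^ k by move=> j; rewrite -Hn.
  have F1 : forall j, j <= n -> b j <> M - 1.
    move=> j Hj Ej; have := st_noAP Hb 0 j (2 ^ k); rewrite Hb0 Ej -/c; lia.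
  have F2 : forall j, j <= n -> b j <> 2.
    move=> j Hj Ej; have := st_noAP Hb j n (2 ^ k); rewrite Ej -/c -/M; lia.
  have Fv : forall v, v <= 5 -> 2 < v ->
      (forall i j, i <= n -> j <= n -> b i < b j -> b i + (2 * M - v) = 2 * b j ->
         b j = M - 2 \/ b j = M - 1 \/ b i = v) ->
      exists i, i <= n /\ b i = v.
    move=> v Hv Hv2 Hcase; apply: NNPP => Hnot.
    apply: (Hgr (2 * M - v)); [lia|lia|].
    move=> i j Hi Hj Hlt E.
    case: (Hcase i j Hi Hj Hlt E) => [Ej|[Ej|Ei]].
    + by apply: Hno; exists j; split; [exact: Hidx|].
    + exact: F1 Hj Ej.
    + by apply: Hnot; exists i.
  have [i4 [Hi4 E4]] : exists i, i <= n /\ b i = 4.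
    apply: Fv; [lia|lia|].
    move=> i j Hi Hj Hlt E; have := Hle j Hj.
    have := F2 i Hi; lia.
  have [i3 [Hi3 E3]] : exists i, i <= n /\ b i = 3.
    apply: Fv; [lia|lia|].
    move=> i j Hi Hj Hlt E; have := Hle j Hj; lia.
  have [i5 [Hi5 E5]] : exists i, i <= n /\ b i = 5.
    apply: Fv; [lia|lia|].
    move=> i j Hi Hj Hlt E; have := Hle j Hj; lia.
  have := st_noAP Hb i3 i4 i5; rewrite E3 E4 E5; lia.
Qed.
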